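(* Let $p$ be an odd prime, $k\in\{-1,1\}$, $n\ge1$, and let $L_n^k(f,p)$ be a Legendre graph of order $n$. Put $q=\lfloor n/p\rfloor$, $r=n-qp$, $\psi=\max\{0,\,2r-p+1\}$, $\delta_s=1$ if $s$ is even and $\delta_s=0$ if $s$ is odd, and $$\mathcal S_1=\sum_{\substack{s=2\\ s\ne p}}^{r+1}(s-1-\delta_s)(s/p),\qquad \mathcal S_2=\sum_{\substack{s=r+2\\ s\ne p}}^{2r}(2r-s+1-\delta_s)(s/p)$$ (empty sums are $0$). Then the number of edges of $L_n^k(f,p)$ equals $$\frac14\left[n^2-n-2nq+pq^2+q-\psi+k(\mathcal S_1+\mathcal S_2)\right].$$ In particular this number does not depend on the bijection $f$.
   Context: For an odd prime $p$ and an integer $a$ not divisible by $p$, $(a/p)$ denotes the Legendre symbol: $1$ if $a$ is a quadratic residue mod $p$, $-1$ otherwise. For $k\in\{-1,1\}$, a Legendre graph $L_n^k(f,p)$ of order $n$ is a simple graph on an $n$-element vertex set $V$ together with a bijection $f:V\to\{1,2,\dots,n\}$, whose edges are exactly the pairs $\{a,b\}$ of distinct vertices with $p\nmid f(a)+f(b)$ and $((f(a)+f(b))/p)=k$. *)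

(* Defs.v *)
From mathcomp Require Import all_boot all_order all_algebra.
Set Implicit Arguments. Unset Strict Implicit. Unset Printing Implicit Defensive.
Import Order.TTheory GRing.Theory Num.Theory.
Local Open Scope ring_scope.

Definition legendre (a p : nat) : int :=
  if (p %| a)%N then 0
  else if [exists x : 'I_p, (x * x == a %[mod p])%N] then 1 else -1.

Definition legendre_adj (V : finType) (f : V -> nat) (p : nat) (k : int)
  (a b : V) : bool :=
  [&& a != b, ~~ (p %| f a + f b)%N & legendre (f a + f b) p == k].

Definition legendre_edges (V : finType) (f : V -> nat) (p : nat) (k : int)
  : {set {set V}} :=
  [set e : {set V} | [exists a : V, exists b : V,
     legendre_adj f p k a b && (e == [set a; b])]].

Definition delta (s : nat) : int := (~~ odd s)%:R.

(* Main.v *)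
Require Import Defs.
From mathcomp Require Import all_boot all_order all_algebra zify ring lra.
Import Order.TTheory GRing.Theory Num.Theory.
Local Open Scope ring_scope.


Lemma leg_mod a p : legendre (a %% p) p = legendre a p.
Proof. by rewrite /legendre /dvdn modn_mod. Qed.

Lemma leg_dvd a p : (p %| a)%N -> legendre a p = 0.
Proof. by rewrite /legendre => ->. Qed.

Lemma leg_ndvd a p : ~~ (p %| a)%N -> legendre a p = 1 \/ legendre a p = -1.
Proof. rewrite /legendre => /negbTE ->; case: ifP; auto. Qed.

Lemma prime_sq_ndvd p x : prime p -> (0 < x < p)%N -> ~~ (p %| x * x)%N.
Proof.
move=> pr /andP[x0 xp]; rewrite Euclid_dvdM // orbb.
apply/negP => /(dvdn_leq x0); rewrite leqNgt xp.
done.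
Qed.

Lemma sum_leg_period p : prime p -> odd p -> \sum_(i < p) legendre i p = 0.
Proof.
move=> pr op; have p0 := prime_gt0 pr; set h := p./2.
have ph : p = h.*2.+1 by rewrite -[in LHS](odd_double_half p) op.
pose sq (x : 'I_p) : 'I_p := Ordinal (ltn_pmod (x*x) p0).
pose H := [set x : 'I_p | (0 < x)%N && (x <= h)%N].
have inj : {in H &, injective sq}.
  move=> x y; rewrite !inE => /andP[x0 xh] /andP[y0 yh] /(congr1 val) /= e.
  apply/val_inj => /=.
  wlog le : x y x0 xh y0 yh e / (y <= x)%N.
    move=> W; case: (leqP y x) => l; first exact: W.
    by apply/esym/W => //; exact: ltnW.
  have : (p %| x*x - y*y)%N by rewrite -eqn_mod_dvd ?leq_mul //; apply/eqP.
  have -> : (x*x - y*y = (x-y)*(x+y))%N by rewrite -subn_sqr.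
  rewrite Euclid_dvdM // => /orP[d|d].
    have xp := ltn_ord x.
    case: (posnP (x-y)) => z; first lia.
    have := dvdn_leq z d; lia.
  have := dvdn_leq _ d; lia.
have cardH : #|H| = h.
  rewrite -sum1_card big_mkcond /=.
  under eq_bigr do rewrite inE.
  rewrite -(big_mkord xpredT (fun i => if (0 < i <= h)%N then 1%N else 0%N)).
  rewrite (big_cat_nat _ (n:=h.+1)) //=; last by lia.
  rewrite big_ltn // [X in (_ + X + _)%N](_ : _ = h); last first.
    rewrite big_nat_cond (eq_bigr (fun=> 1%N)); last first.
      by move=> i /andP[/andP[a b] _]; rewrite a -ltnS b.
    by rewrite -big_nat_cond sum_nat_const_nat; lia.
  rewrite big_nat_cond big1 ?addn0 //.
  by move=> i /andP[/andP[hi _] _]; case: ifP => //; lia.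
have HS : forall i : 'I_p, (legendre i p == 1) = (i \in sq @: H).
  move=> i; rewrite /legendre; case: ifP => [pd|pn].
    apply/esym/negbTE/imsetP => -[x]; rewrite inE => /andP[x0 xh] ei.
    have := @prime_sq_ndvd p x pr; rewrite x0 ltn_ord => /(_ isT).
    by move/negP; apply; move: pd; rewrite ei /dvdn /= modn_mod.
  case: ifP => [/existsP[x /eqP ex]|nex]; last first.
    apply/esym/negbTE/imsetP => -[x _ ei]; move/negbT: nex => /negP; apply.
    apply/existsP; exists x; apply/eqP.
    by rewrite ei /= modn_mod.
  apply/esym/imsetP.
  have xp := ltn_ord x.
  have i0 : (0 < i)%N by case: (posnP i) => // z; move: pn; rewrite z dvdn0.
  have x0 : (0 < x)%N.
    case: (posnP x) => // z; move: ex; rewrite z mul0n mod0n => /esym.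
    by rewrite modn_small // => z'; move: i0; rewrite z'.
  case: (leqP x h) => xh.
    exists x; first by rewrite inE x0 xh.
    by apply/val_inj => /=; rewrite ex modn_small.
  have yp : (p - x < p)%N by lia.
  exists (Ordinal yp); first by rewrite inE /=; lia.
  apply/val_inj => /=; rewrite -[LHS](modn_small (ltn_ord i)) -ex; apply/esym.
  apply/eqP; rewrite -(eqn_modDr (x * (p - x))).
  rewrite -mulnDl subnK; last exact: ltnW.
  rewrite -mulnDr addnC subnK; last exact: ltnW.
  by rewrite modnMr modnMl.
have pt : forall i : 'I_p, legendre i p = 2 * (legendre i p == 1)%:R - (i != 0%N :> nat)%:R.
  move=> i; case: (boolP (p %| i)%N) => d.
    have -> : (i == 0%N :> nat) by move: d; rewrite /dvdn modn_small.
    by rewrite leg_dvd.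
  have -> : (i != 0%N :> nat) by apply: contra d => /eqP ->.
  by case: (@leg_ndvd i p d) => ->.
rewrite (eq_bigr _ (fun i _ => pt i)) sumrB -mulr_sumr.
under eq_bigr do rewrite HS.
rewrite -natr_sum -natr_sum.
have -> : (\sum_(i < p) (i \in sq @: H) = h)%N.
  rewrite -cardH -(card_in_imset inj) -sum1_card [RHS]big_mkcond /=.
  by apply: eq_bigr => i _; case: (i \in _).
have -> : (\sum_(i < p) (i != 0%N :> nat) = h.*2)%N.
  rewrite -(big_mkord xpredT (fun i => nat_of_bool (i != 0%N))) big_ltn //=.
  rewrite big_nat_cond (eq_bigr (fun=> 1%N)); last first.
    by move=> i /andP[/andP[a b] _]; rewrite -lt0n a.
  by rewrite -big_nat_cond sum_nat_const_nat; lia.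
rewrite -muln2 natrM; lia.
Qed.



Lemma sum_mod_bij p (F : nat -> int) (g : nat -> nat) : (0 < p)%N ->
  (forall i j, (i < p)%N -> (j < p)%N -> g i %% p = g j %% p -> i = j)%N ->
  \sum_(i < p) F (g i %% p)%N = \sum_(i < p) F i.
Proof.
move=> p0 gi.
pose h (i : 'I_p) : 'I_p := Ordinal (ltn_pmod (g i) p0).
have hinj : injective h.
  by move=> i j /(congr1 val) /= /gi e; apply/val_inj/e.
by rewrite [RHS](reindex_inj hinj).
Qed.

Lemma block0 p x : prime p -> odd p -> \sum_(x <= s < x + p) legendre s p = 0.
Proof.
move=> pr op; have p0 := prime_gt0 pr.
rewrite -{1}(add0n x) big_addn addKn big_mkord.
under eq_bigr do rewrite -leg_mod.
rewrite (@sum_mod_bij p (fun i => legendre i p) (fun i => i + x)%N) //.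
  exact: sum_leg_period.
move=> i j ip jp /eqP; rewrite eqn_modDr !modn_small // => /eqP //.
Qed.

Definition G p x := \sum_(0 <= s < x) legendre s p.
Definition D p n := \sum_(n.+2 <= s < (2 * n).+2) legendre s p.

Lemma G_per p x : prime p -> odd p -> G p (x + p) = G p x.
Proof.
move=> pr op; rewrite /G (big_cat_nat _ (n := x)) //=; last by lia.
by rewrite block0 // addr0.
Qed.

Lemma G_mod p x : prime p -> odd p -> G p x = G p (x %% p).
Proof.
move=> pr op; rewrite {1}(divn_eq x p); elim: (x %/ p)%N => [|k IH].
  by rewrite mul0n add0n.
by rewrite mulSn -addnA addnC G_per // addnC.
Qed.

Lemma D_G p n : D p n = G p (2 * n).+2 - G p n.+2.
Proof.
rewrite /D /G (big_cat_nat _ (n := n.+2) (m := 0) (p := (2*n).+2)) //=; last by lia.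
by rewrite addrC addrK.
Qed.

Lemma D_per p n : prime p -> odd p -> D p (n + p) = D p n.
Proof.
move=> pr op; rewrite !D_G.
have -> : ((2 * (n + p)).+2 = (2 * n).+2 + p + p)%N by lia.
have -> : ((n + p).+2 = n.+2 + p)%N by lia.
by rewrite !G_per.
Qed.

Lemma D_mod p n : prime p -> odd p -> D p n = D p (n %% p).
Proof.
move=> pr op; rewrite {1}(divn_eq n p); elim: (n %/ p)%N => [|k IH].
  by rewrite mul0n add0n.
by rewrite mulSn -addnA addnC D_per // addnC.
Qed.

Lemma sumD p : prime p -> odd p -> \sum_(j < p) D p j = 0.
Proof.
move=> pr op; have p0 := prime_gt0 pr.
under eq_bigr do rewrite D_G G_mod // [G p _.+2]G_mod //.
rewrite sumrB.
rewrite (@sum_mod_bij p (G p) (fun j => (2 * j).+2)) //; last first.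
  move=> i j ip jp; wlog le : i j ip jp / (j <= i)%N.
    move=> W; case: (leqP j i) => l; first exact: W.
    by move=> e; apply/esym/W => //; exact: ltnW.
  move/eqP; rewrite -addn2 -[(2 * j).+2]addn2 eqn_modDr eqn_mod_dvd ?leq_mul2l ?le ?orbT //.
  rewrite -mulnBr mulnC Gauss_dvdl; last by rewrite coprime_sym prime_coprime // dvdn2 op.
  move=> d; case: (posnP (i - j)) => z; first lia.
  have := dvdn_leq z d; lia.
rewrite (@sum_mod_bij p (G p) (fun j => j.+2)) ?subrr //.
move=> i j ip jp /eqP; rewrite -addn2 -[j.+2]addn2 eqn_modDr !modn_small // => /eqP //.
Qed.


Definition S1f p r : int := \sum_(2 <= s < r.+2 | s != p)
                    (s%:Z - 1 - delta s) * legendre s p.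
Definition S2f p r : int := \sum_(r.+2 <= s < (2 * r).+1 | s != p)
                    (2 * r%:Z - s%:Z + 1 - delta s) * legendre s p.

Lemma drop_filter p a b (w : nat -> int) :
  \sum_(a <= s < b | s != p) w s * legendre s p = \sum_(a <= s < b) w s * legendre s p.
Proof.
rewrite big_mkcond; apply: eq_bigr => s _; case: eqP => // ->.
by rewrite leg_dvd ?mulr0.
Qed.

Lemma Pstep p m : S1f p m.+1 + S2f p m.+1 = S1f p m + S2f p m + 2 * D p m.
Proof.
rewrite /S1f /S2f !drop_filter.
rewrite big_nat_recr //=.
set w2 := fun r s => 2 * r%:Z - s%:Z + 1 - delta s.
have E1 : \sum_(m.+1.+2 <= s < (2 * m.+1).+1) w2 m.+1 s * legendre s p =
   \sum_(m.+2 <= s < (2 * m).+2) w2 m.+1 s * legendre s p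
   - (m.+1%:Z - delta m.+2) * legendre m.+2 p.
  have h1 : \sum_(m.+2 <= s < (2 * m.+1).+1) w2 m.+1 s * legendre s p =
     w2 m.+1 m.+2 * legendre m.+2 p + \sum_(m.+1.+2 <= s < (2 * m.+1).+1) w2 m.+1 s * legendre s p.
    by rewrite big_ltn //; lia.
  have h2 : \sum_(m.+2 <= s < (2 * m.+1).+1) w2 m.+1 s * legendre s p =
     \sum_(m.+2 <= s < (2 * m).+2) w2 m.+1 s * legendre s p + w2 m.+1 (2 * m).+2 * legendre (2 * m).+2 p.
    have -> : ((2 * m.+1).+1 = (2 * m).+2.+1)%N by lia.
    by rewrite big_nat_recr //; lia.
  have h3 : w2 m.+1 (2 * m).+2 = 0.
    rewrite /w2 /delta !mul2n /= odd_double /=; lia.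
  have h4 : w2 m.+1 m.+2 = m.+1%:Z - delta m.+2 by rewrite /w2; lia.
  move: h1 h2; rewrite h3 h4 mul0r addr0 => ->; lra.
have E2 : \sum_(m.+2 <= s < (2 * m).+1) w2 m s * legendre s p =
   \sum_(m.+2 <= s < (2 * m).+2) w2 m s * legendre s p.
  clear E1; case: m => [|m]; first by rewrite !big_geq.
  rewrite [in RHS]big_nat_recr /=; last by lia.
  suff -> : w2 m.+1 (2 * m.+1).+1 = 0 by rewrite mul0r addr0.
  rewrite /w2 /delta !mul2n oddS odd_double /=; lia.
rewrite /= in E1 E2; rewrite E1 E2 /D.
have -> : \sum_(m.+2 <= s < (2 * m).+2) w2 m.+1 s * legendre s p =
   \sum_(m.+2 <= s < (2 * m).+2) w2 m s * legendre s p
   + 2 * \sum_(m.+2 <= s < (2 * m).+2) legendre s p.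
  rewrite mulr_sumr -big_split /=; apply: eq_bigr => s _; rewrite /w2; lia.
set X := \sum_(_ <= _ < _) _.
rewrite /w2.
have -> : (m.+2%:Z - 1 = m.+1%:Z) by lia.
ring.
Qed.


Definition Yf (p n : nat) : int :=
  let q := (n %/ p)%N in
  let r := (n - q * p)%N in
  let psi : int := Num.max 0 (2 * r%:Z - p%:Z + 1) in
  (n%:Z ^+ 2 - n%:Z - 2 * n%:Z * q%:Z + p%:Z * q%:Z ^+ 2 + q%:Z - psi).

Lemma Ystep p n : prime p -> odd p ->
  Yf p n.+1 = Yf p n + 2 * (n%:Z - (((2 * n).+1 %/ p)%:Z - (n.+1 %/ p)%:Z)).
Proof.
move=> pr op; have p0 := prime_gt0 pr; have p2 := prime_gt1 pr.
have ph : p = (p./2).*2.+1 by rewrite -[in LHS](odd_double_half p) op.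
rewrite /Yf.
set q := (n %/ p)%N. have hn := divn_eq n p. set r := (n %% p)%N in hn.
have rp : (r < p)%N by rewrite ltn_mod.
have -> : (n - q * p = r)%N by lia.
have e2 : ((2 * n).+1 = (2 * q) * p + (2 * r).+1)%N by lia.
rewrite e2 divnMDl //.
case: (ltnP r.+1 p) => rp1.
  have e1 : (n.+1 = q * p + r.+1)%N by lia.
  rewrite e1 divnMDl // (divn_small rp1) addn0.
  have -> : (q * p + r.+1 - q * p = r.+1)%N by lia.
  case: (ltnP (2 * r).+1 p) => r2.
    rewrite (divn_small r2) addn0.
    rewrite max_l; last by lia.
    rewrite max_l; last by lia.
    rewrite hn !PoszD !PoszM; ring.
  have -> : ((2 * r).+1 %/ p = 1)%N.
    have -> : ((2 * r).+1 = 1 * p + ((2 * r).+1 - p))%N by lia.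
    by rewrite divnMDl // divn_small; lia.
  rewrite max_r; last by lia.
  rewrite max_r; last by lia.
  rewrite hn !PoszD !PoszM; ring.
have e1 : (n.+1 = q.+1 * p + 0)%N by lia.
rewrite e1 divnMDl // div0n addn0.
rewrite addn0 subnn.
have -> : ((2 * r).+1 %/ p = 1)%N.
  have -> : ((2 * r).+1 = 1 * p + ((2 * r).+1 - p))%N by lia.
  by rewrite divnMDl // divn_small; lia.
rewrite max_l; last by lia.
rewrite max_r; last by lia.
have hnZ : n%:Z = q%:Z * p%:Z + r%:Z by rewrite {1}hn PoszD PoszM.
have hpZ : p%:Z = r%:Z + 1 by lia.
rewrite !PoszM !PoszD [Posz q.+1]intS hnZ hpZ; ring.
Qed.


Lemma Mcount p m : (0 < p)%N -> (\sum_(1 <= s < m.+1) (p %| s) = m %/ p)%N.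
Proof.
move=> p0; elim: m => [|m IH]; first by rewrite big_geq // div0n.
by rewrite big_nat_recr //= IH divnS // addnC.
Qed.

Lemma ccount p n : (0 < p)%N ->
  (\sum_(n.+2 <= s < (2 * n).+2) (p %| s) = (2 * n).+1 %/ p - n.+1 %/ p)%N.
Proof.
move=> p0; rewrite -!Mcount //.
rewrite (big_cat_nat _ (n := n.+2) (m := 1) (p := (2 * n).+2)) //=; last by lia.
by rewrite addKn.
Qed.

Lemma Acount p n :
  (\sum_(n.+2 <= s < (2 * n).+2) ~~ (p %| s) + \sum_(n.+2 <= s < (2 * n).+2) (p %| s) = n)%N.
Proof.
rewrite -big_split /= (eq_bigr (fun=> 1%N)); last by move=> s _; case: (p %| s)%N.
by rewrite sum_nat_const_nat; lia.
Qed.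

Definition good p k s := ~~ (p %| s)%N && (legendre s p == k).

Lemma good_int p k s : (k = 1 \/ k = -1) ->
  2 * (good p k s)%:R = (~~ (p %| s)%N)%:R + k * legendre s p :> int.
Proof.
move=> hk; rewrite /good /legendre; case: (p %| s)%N => /=; first by rewrite mulr0 mulr0.
by case: ifP => _; case: hk => ->.
Qed.

Definition cnt p k n := (\sum_(1 <= j < n.+1) \sum_(1 <= i < j) good p k (i + j))%N.

Lemma cnt_step p k n :
  cnt p k n.+1 = (cnt p k n + \sum_(n.+2 <= s < (2 * n).+2) good p k s)%N.
Proof.
rewrite /cnt big_nat_recr //=; congr (_ + _)%N.
have -> : (n.+2 = 1 + n.+1)%N by [].
rewrite big_addn.
have -> : ((2 * n).+2 - n.+1 = n.+1)%N by lia.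
by apply: eq_bigr => i _; rewrite addnC.
Qed.



Lemma reindex_f (V : finType) (f : V -> nat) n (F : nat -> nat) :
  #|V| = n -> injective f -> (forall v, (1 <= f v <= n)%N) ->
  (\sum_(v : V) F (f v) = \sum_(1 <= i < n.+1) F i)%N.
Proof.
move=> cV fi fr.
have -> : (\sum_(v : V) F (f v) = \sum_(i <- map f (enum V)) F i)%N.
  by rewrite big_map big_enum.
rewrite /index_iota subSS subn0; apply: perm_big.
have u1 : uniq (map f (enum V)) by rewrite map_inj_uniq ?enum_uniq.
have sub : {subset map f (enum V) <= iota 1 n}.
  move=> x /mapP[v _ ->]; rewrite mem_iota; have := fr v; lia.
have sz : (size (iota 1 n) <= size (map f (enum V)))%N.
  by rewrite size_iota size_map -cardE cV.
have [_ eqm] := uniq_min_size u1 sub sz.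
by apply: uniq_perm => //; exact: iota_uniq.
Qed.

Lemma card_edges (V : finType) (f : V -> nat) p k n :
  #|V| = n -> injective f -> (forall v, (1 <= f v <= n)%N) ->
  #|legendre_edges f p k| = cnt p k n.
Proof.
move=> cV fi fr.
pose D := [set ab : V * V | (f ab.1 < f ab.2)%N && good p k (f ab.1 + f ab.2)].
have -> : legendre_edges f p k = [set [set ab.1; ab.2] | ab in D].
  apply/setP => e; rewrite inE; apply/existsP/imsetP.
    move=> [a /existsP[b /andP[/and3P[ab pd lk] /eqP ->]]].
    have : f a != f b by apply: contra ab => /eqP/fi ->.
    rewrite neq_ltn => /orP[lt|lt].
      by exists (a, b) => //; rewrite inE /= lt /good pd lk.
    exists (b, a); first by rewrite inE /= lt /good [(f b + f a)%N]addnC pd lk.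
    by rewrite /= setUC.
  move=> [[a b]]; rewrite inE /= => /andP[lt /andP[pd lk]] ->.
  exists a; apply/existsP; exists b; rewrite eqxx andbT /legendre_adj pd lk andbT.
  by rewrite andbT; apply/eqP => eab; move: lt; rewrite eab ltnn.
rewrite card_in_imset; last first.
  move=> [a b] [c d]; rewrite !inE /= => /andP[l1 _] /andP[l2 _] E.
  have ha : a \in [set c; d] by rewrite -E set21.
  have hb : b \in [set c; d] by rewrite -E set22.
  move: ha hb; rewrite !inE => /orP[/eqP ea|/eqP ea] /orP[/eqP eb|/eqP eb]; subst.
  - by move: l1; rewrite ltnn.
  - by [].
  - by move: l1 l2; lia.
  - by move: l1; rewrite ltnn.
rewrite -sum1dep_card big_mkcond /=.
rewrite (eq_bigr (fun ab : V * V => nat_of_bool ((f ab.1 < f ab.2)%N && good p k (f ab.1 + f ab.2)))); last first.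
  by move=> ab _; case: ifP.
rewrite -(pair_big xpredT xpredT (fun a b => nat_of_bool ((f a < f b)%N && good p k (f a + f b)))) /=.
rewrite (@reindex_f V f n (fun i => \sum_(b : V) nat_of_bool ((i < f b)%N && good p k (i + f b)))%N cV fi fr).
under eq_bigr do rewrite (@reindex_f V f n (fun j => nat_of_bool ((_ < j)%N && good p k (_ + j))) cV fi fr).
rewrite /cnt exchange_big_nat; apply: eq_big_nat => j /andP[j1 jn].
rewrite [RHS](@big_nat_widen _ _ _ 1 j n.+1) //; last exact: ltnW.
rewrite [RHS]big_mkcond; apply: eq_bigr => i _.
by case: (i < j)%N.
Qed.

Lemma Psum p m : S1f p m + S2f p m = 2 * \sum_(j < m) D p j.
Proof.
elim: m => [|m IH].
  by rewrite /S1f /S2f !big_geq // big_ord0 mulr0 addr0.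
by rewrite Pstep IH big_ord_recr /= mulrDr.
Qed.

Lemma rstep p n : prime p -> odd p ->
  S1f p (n.+1 - n.+1 %/ p * p) + S2f p (n.+1 - n.+1 %/ p * p) =
  S1f p (n - n %/ p * p) + S2f p (n - n %/ p * p) + 2 * D p n.
Proof.
move=> pr op; have p0 := prime_gt0 pr.
have rr : forall m, (m - m %/ p * p = m %% p)%N.
  by move=> m; rewrite {1}(divn_eq m p) addKn.
rewrite !rr modnS D_mod //.
case: ifP => d.
  have ep : (n %% p).+1 = p.
    have h1 := ltn_pmod n p0.
    have h2 : ((n %% p).+1 %% p = 0)%N.
      by rewrite -addn1 modnDml addn1; exact/eqP.
    case: (ltnP (n %% p).+1 p) => h3; last lia.
    by move: h2; rewrite modn_small.
  rewrite !Psum big_ord0 mulr0.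
  have S := big_ord_recr (n %% p) (fun j => D p j) (op := +%R) (idx := 0 : int); rewrite /= ep sumD // in S.
  have -> : \sum_(i < n %% p) D p i = - D p (n %% p) by apply/eqP; rewrite -addr_eq0 -S.
  by rewrite mulrN addrC subrr.
by rewrite Pstep.
Qed.

Lemma mainZ p k n : prime p -> odd p -> (k = 1 \/ k = -1) ->
  4 * (cnt p k n)%:Z = Yf p n + k * (S1f p (n - n %/ p * p) + S2f p (n - n %/ p * p)).
Proof.
move=> pr op hk; have p0 := prime_gt0 pr; have p1 := prime_gt1 pr.
elim: n => [|n IH].
  rewrite /cnt big_geq // /Yf div0n sub0n /S1f /S2f !big_geq //.
  rewrite max_l; last by lia.
  by rewrite mulr0; ring.
rewrite cnt_step PoszD mulrDr IH Ystep // rstep //.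
have -> : 4 * (\sum_(n.+2 <= s < (2 * n).+2) good p k s)%N%:Z =
    2 * (\sum_(n.+2 <= s < (2 * n).+2) (2 * (good p k s)%:R : int)).
  by rewrite -mulr_sumr mulrA -natz natr_sum; under eq_bigr do rewrite natz.
under eq_bigr do rewrite good_int //.
rewrite big_split /= -mulr_sumr -natr_sum.
have hA := Acount p n; have hc := ccount p n p0.
set A := (\sum_(_ <= _ < _) ~~ _)%N in hA *.
rewrite hc in hA.
rewrite /D.
set X := \sum_(_ <= _ < _) legendre _ p.
have hAZ : A%:Z = n%:Z - (((2 * n).+1 %/ p)%:Z - (n.+1 %/ p)%:Z).
  have le : (n.+1 %/ p <= (2 * n).+1 %/ p)%N by apply: leq_div2r; lia.
  lia.
have -> : A%:R = A%:Z :> int by lia.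
rewrite hAZ; ring.
Qed.

Theorem lemma3p2 (p : nat) (k : int) (n : nat) (V : finType) (f : V -> nat) :
  prime p -> odd p ->
  (k = 1 \/ k = -1) ->
  (1 <= n)%N ->
  #|V| = n ->
  injective f ->
  (forall v : V, (1 <= f v <= n)%N) ->
  let q := (n %/ p)%N in
  let r := (n - q * p)%N in
  let psi : int := Num.max 0 (2 * r%:Z - p%:Z + 1) in
  let S1 : int := \sum_(2 <= s < r.+2 | s != p)
                    (s%:Z - 1 - delta s) * legendre s p in
  let S2 : int := \sum_(r.+2 <= s < (2 * r).+1 | s != p)
                    (2 * r%:Z - s%:Z + 1 - delta s) * legendre s p in
  (#|legendre_edges f p k|%:Q =
     ((n%:Z ^+ 2 - n%:Z - 2 * n%:Z * q%:Z + p%:Z * q%:Z ^+ 2 + q%:Z - psi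
       + k * (S1 + S2))%:~R) / 4).
Proof.
move=> pr op hk n1 cV fi fr q r psi S1 S2.
have M := @mainZ p k n pr op hk.
have E : (n%:Z ^+ 2 - n%:Z - 2 * n%:Z * q%:Z + p%:Z * q%:Z ^+ 2 + q%:Z - psi
       + k * (S1 + S2)) = 4 * (cnt p k n)%:Z by exact: (esym M).
rewrite E (@card_edges V f p k n cV fi fr) intrM /=.
rewrite mulrC mulKf //.
Qed.
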